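(* Let $p,q$ be integers with $0\le p<q$ and let $n\ge 1$. Then $$\operatorname{Card}\{F_n^{p,q}\}=\sum_{k=0}^{\lfloor \frac{n-p}{q}\rfloor}\left[\binom{2n-(kq+p)-1}{n-1}-\binom{2n-(kq+p)-1}{n}\right].$$
   Context: A Dyck (Catalan) path of semilength $n$ is a lattice path from $(0,0)$ to $(2n,0)$ with steps $(1,1)$ and $(1,-1)$ that never goes below the $x$-axis. Its first rise is the length of its maximal initial run of $(1,1)$ steps. For integers $0\le p<q$, the set $F_n^{p,q}$ of generalized Fine sequences on $[n]$ congruous $q$ modulo $p$ is the set of Dyck paths of semilength $n$ whose first rise equals $kq+p$ for some integer $k\ge 0$. *)

(* Defs.v *)
From mathcomp Require Import all_boot all_order all_algebra.
Set Implicit Arguments. Unset Strict Implicit. Unset Printing Implicit Defensive.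

(* A lattice path of length m is encoded as a sequence of booleans:
   true = up-step (1,1), false = down-step (1,-1). *)

Definition height (s : seq bool) : int :=
  (count id s)%:Z - (count negb s)%:Z.

Definition is_dyck (s : seq bool) : bool :=
  (height s == 0%R) && [forall i : 'I_(size s).+1, (0 <= height (take i s))%R].

Definition first_rise (s : seq bool) : nat := find negb s.

Definition F_set (n p q : nat) : {set (2 * n).-tuple bool} :=
  [set t : (2 * n).-tuple bool |
     is_dyck t && [exists k : 'I_(2 * n).+1, first_rise t == k * q + p]].

(* Main.v *)
Require Import Defs.
From mathcomp Require Import all_boot all_order all_algebra.
From mathcomp Require Import zify ring lra.
Import GRing.Theory Num.Theory.

Section Aux.
Local Open Scope ring_scope.
Fixpoint ok (h : int) (s : seq bool) : bool :=
  match s with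
  | [::] => h == 0
  | b :: s' => (0 <= h) && ok (h + (if b then 1 else -1)) s'
  end.

Lemma heightE b s : height (b :: s) = (if b then 1 else -1) + height s.
Proof. rewrite /height; case: b => /=; lia. Qed.

Lemma height0 : height [::] = 0. Proof. by []. Qed.

Lemma okP s h : ok h s <-> (h + height s = 0 /\ forall i, 0 <= h + height (take i s)).
Proof.
elim: s h => [|b s IH] h /=.
  split; first by move/eqP=> ->; split => // i; rewrite add0r.
  by case=> H _; apply/eqP; rewrite -H height0 addr0.
rewrite heightE; split.
  case/andP=> H0 /IH [H1 H2]; split; first by rewrite addrA.
  case=> [|i] /=; first by rewrite height0 addr0.
  by rewrite heightE addrA.
case=> H1 H2; apply/andP; split.
  by have := H2 0%N; rewrite take0 height0 addr0.
apply/IH; split; first by rewrite -addrA.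
by move=> i; have := H2 i.+1; rewrite /= heightE addrA.
Qed.

Lemma dyck_ok s : is_dyck s = ok 0 s.
Proof.
apply/idP/idP.
  case/andP=> /eqP H /forallP H2; apply/okP; rewrite add0r; split => // i.
  rewrite add0r; case: (leqP i (size s)) => Hi.
    by have := H2 (Ordinal (Hi : (i < (size s).+1)%N)).
  by rewrite take_oversize ?H // ltnW.
move/okP=> [H1 H2]; apply/andP; split; first by rewrite -(add0r (height s)) H1.
by apply/forallP=> i; have := H2 i; rewrite add0r.
Qed.

Lemma sum_tupleS m (F : seq bool -> nat) :
  (\sum_(t : m.+1.-tuple bool) F t =
   \sum_(t : m.-tuple bool) F (true :: t) + \sum_(t : m.-tuple bool) F (false :: t))%N.
Proof.
rewrite (reindex (fun p : bool * m.-tuple bool => [tuple of p.1 :: p.2])) /=.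
  by rewrite -(pair_big xpredT xpredT (fun b (t : m.-tuple bool) => F (b :: t))) big_bool.
exists (fun t : m.+1.-tuple bool => (thead t, [tuple of behead t])).
  move=> [b t] _ /=; congr (_, _); exact: val_inj.
by move=> t _; rewrite [RHS]tuple_eta; apply: val_inj.
Qed.

Lemma sum_tuple0 (F : seq bool -> nat) :
  (\sum_(t : 0.-tuple bool) F t = F [::])%N.
Proof. by rewrite (big_pred1 [tuple]) // => t; apply/esym/eqP; exact: tuple0. Qed.
Definition N m h := (\sum_(t : m.-tuple bool) (ok h t : nat))%N.

Lemma N0 h : N 0 h = (h == 0 : nat).
Proof. by rewrite /N (sum_tuple0 (fun s => ok h s)). Qed.

Lemma Nrec m h : N m.+1 h = if 0 <= h then (N m (h + 1) + N m (h - 1))%N else 0%N.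
Proof.
rewrite /N (sum_tupleS m (fun s => ok h s)) /=; case: ifP => H.
  by congr (_ + _)%N; apply: eq_bigr => t _; rewrite /= H.
by rewrite !big1 // => t _; rewrite /= H.
Qed.

Lemma NrecP m h : 0 <= h -> N m.+1 h = (N m (h + 1) + N m (h - 1))%N.
Proof. by move=> H; rewrite Nrec H. Qed.

Lemma NrecN m h : h < 0 -> N m.+1 h = 0%N.
Proof. by move=> H; rewrite Nrec; case: ifP => //; lia. Qed.

Lemma Nbig m h : m%:Z < h -> N m h = 0%N.
Proof.
elim: m h => [|m IH] h H; first by rewrite N0; case: eqP => // E; lia.
rewrite Nrec; case: ifP => // _; rewrite !IH //; lia.
Qed.

Lemma Nclosed m u d : (u + d = m)%N -> (u <= d.+1)%N ->
  (N m (d%:Z - u%:Z))%:Z = ('C(m, d))%:Z - ('C(m, d.+1))%:Z.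
Proof.
elim: m u d => [|m IH] u d.
  move=> E _; have [-> ->] : u = 0%N /\ d = 0%N by lia.
  by rewrite subrr N0.
case: u => [|u'].
  rewrite add0n => E _; subst d; rewrite subr0 NrecP //.
  rewrite Nbig; last by lia.
  have -> : (m.+1%:Z - 1 = m%:Z - 0%N%:Z) by lia.
  rewrite add0n IH // binn bin_small // !binn bin_small //; lia.
move=> E Hu.
case: (ltngtP u' d) => Hud; last first.
  subst u'; rewrite NrecN; last by lia.
  have -> : m.+1 = (d + d.+1)%N by lia.
  rewrite -{1}(bin_sub (_ : d.+1 <= d + d.+1)%N) //; last by lia.
  have -> : (d + d.+1 - d.+1 = d)%N by lia.
  by rewrite subrr.
  lia.
case: d E Hu Hud => [|d'] E Hu Hud; first by [].
rewrite NrecP; last by lia.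
have -> : (d'.+1%:Z - u'.+1%:Z + 1 = d'.+1%:Z - u'%:Z) by lia.
have -> : (d'.+1%:Z - u'.+1%:Z - 1 = d'%:Z - u'.+1%:Z) by lia.
rewrite PoszD IH; last 2 first; [lia|lia|].
rewrite IH; last 2 first; [lia|lia|].
rewrite !binS !PoszD; lia.
Qed.

Definition G m h r := (\sum_(t : m.-tuple bool) (ok h t && (find negb t == r)%N : nat))%N.

Lemma G0 m h : G m.+1 h 0 = if 0 <= h then N m (h - 1) else 0%N.
Proof.
rewrite /G (sum_tupleS m (fun s => ok h s && (find negb s == _)%N)) /= big1 ?add0n; last by move=> t _; rewrite andbF.
case: ifP => H; last by rewrite big1 // => t _; rewrite /= H.
by apply: eq_bigr => t _; rewrite andbT.
Qed.

Lemma GS m h r : G m.+1 h r.+1 = if 0 <= h then G m (h + 1) r else 0%N.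
Proof.
rewrite /G (sum_tupleS m (fun s => ok h s && (find negb s == _)%N)) /= [X in (_ + X)%N]big1 ?addn0; last by move=> t _; rewrite andbF.
case: ifP => H; last by rewrite big1 // => t _; rewrite /= H.
by apply: eq_bigr => t _; rewrite eqSS.
Qed.

Lemma Gclosed r h m' : 0 <= h -> G (r + m'.+1) h r = N m' (h + r%:Z - 1).
Proof.
elim: r h => [|r IH] h H; first by rewrite add0n G0 H addr0.
rewrite addSn GS H IH; last by lia.
congr N; lia.
Qed.
End Aux.
Lemma cnt_size s : (count id s + count negb s)%N = size s.
Proof. elim: s => [|[] s IH] //=; lia. Qed.

Lemma find_cnt s : (find negb s <= count id s)%N.
Proof. elim: s => [|[] s IH] //=; lia. Qed.

Lemma fr_le n s : ok 0 s -> size s = (2 * n)%N -> (find negb s <= n)%N.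
Proof.
move=> /okP [H _] Hs; have := cnt_size s; have := find_cnt s.
move: H; rewrite /height; lia.
Qed.

Lemma sum_has q p r K : (0 < q)%N ->
  (\sum_(0 <= k < K) (r == k * q + p : nat))%N = has (fun k => r == k * q + p) (iota 0 K).
Proof.
move=> Hq; elim: K => [|K IH]; first by rewrite big_geq.
rewrite big_nat_recr // IH -addn1 iotaD has_cat /= orbF.
case E: (r == K * q + p); last by rewrite addn0 orbF.
case H: has => //; exfalso.
move/hasP: H => [k]; rewrite mem_iota => /andP [_ Hk] /eqP E2.
move/eqP: E; rewrite E2 => /eqP; rewrite eqn_add2r eqn_pmul2r // => /eqP; lia.
Qed.

Lemma exists_has n q p r : (0 < q)%N -> (r <= n)%N ->
  [exists k : 'I_(2 * n).+1, r == k * q + p] = has (fun k => r == k * q + p) (iota 0 n.+1).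
Proof.
move=> Hq Hr; apply/existsP/hasP.
  case=> k E; exists (val k); last exact: E.
  rewrite mem_iota /=; have := leq_pmulr k Hq; move/eqP: E; lia.
case=> k; rewrite mem_iota => /andP [_ Hk] E.
have Hk' : (k < (2 * n).+1)%N by lia.
by exists (Ordinal Hk').
Qed.

Lemma per_t n p q (t : (2 * n).-tuple bool) : (0 < q)%N ->
  (t \in F_set n p q : nat) =
  (\sum_(0 <= k < n.+1 | (k * q + p <= n)%N) (ok 0 t && (find negb t == k * q + p)%N : nat))%N.
Proof.
move=> Hq; rewrite inE dyck_ok /first_rise.
case O: (ok 0 t) => /=; last by rewrite big1.
have Hr := @fr_le n t O (size_tuple t).
rewrite big_mkcond /= exists_has // -sum_has //.
apply: eq_bigr => k _; case: ifP => // H.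
by case: eqP => // E; move: H; rewrite -E Hr.
Qed.

Theorem mainTheorem1 (p q n : nat) (hpq : (p < q)%N) (hn : (1 <= n)%N) :
  (#|F_set n p q|%:Z =
   \sum_(0 <= k < n.+1 | (k * q + p <= n)%N)
     (('C((2 * n - (k * q + p)).-1, n.-1))%:Z
      - ('C((2 * n - (k * q + p)).-1, n))%:Z))%R.
Proof.
have Hq : (0 < q)%N by lia.
have -> : #|F_set n p q| =
   (\sum_(0 <= k < n.+1 | (k * q + p <= n)%N) G (2 * n) 0 (k * q + p))%N.
  rewrite -sum1_card big_mkcond /=.
  rewrite (eq_bigr (fun t : (2 * n).-tuple bool => (\sum_(0 <= k < n.+1 | (k * q + p <= n)%N) (ok 0 t && (find negb t == k * q + p)%N : nat))%N)); last first.
    by move=> t _; rewrite -per_t //; case: (_ \in _).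
  by rewrite exchange_big.
rewrite (big_morph (fun x : nat => Posz x) PoszD (erefl _)).
apply: eq_bigr => k Hk.
set r := (k * q + p)%N.
set m := (2 * n - r).-1.
have E : (2 * n = r + m.+1)%N by rewrite /m /r; lia.
have -> : G (2 * n) 0 r = G (r + m.+1) 0 r by rewrite -E.
rewrite Gclosed //.
have -> : (0 + r%:Z - 1 = (n.-1)%:Z - (n - r)%N%:Z)%R by rewrite /r; lia.
rewrite Nclosed; last 2 first.
- rewrite /m /r; lia.
- lia.
by rewrite prednK.
Qed.
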